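(* Let $m,a,b,t\in\mathbb{N}$ with $m\geq 3$, $a\geq 1$, $t\in\{2,\ldots,m-1\}$ and $(t-1)(am+1)<bm+t<t(am+1)$, and let $S=\langle m,\ am+1,\ bm+t\rangle$. If $\mathrm{Ap}(S,m)=\{w(0),w(1),\ldots,w(m-1)\}$, where $w(i)$ is the least element of $S$ congruent to $i$ modulo $m$, then \[ w(i)=\Big\lfloor \frac{i}{t}\Big\rfloor (bm+t)+(i\bmod t)(am+1)\quad\text{for all } i\in\{0,1,\ldots,m-1\}. \]
   Context: $\mathbb{N}=\{0,1,2,\ldots\}$. $\langle A\rangle$ denotes the submonoid of $(\mathbb{N},+)$ generated by $A$ (here $S$ is a numerical semigroup, i.e. has finite complement in $\mathbb{N}$). For $n\in S\setminus\{0\}$, $\mathrm{Ap}(S,n)=\{s\in S: s-n\notin S\}$. $\lfloor x\rfloor$ is the floor and $a\bmod b$ the remainder of the division of $a$ by $b$. *)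

(* Defs.v *)
From mathcomp Require Import all_boot.
Set Implicit Arguments. Unset Strict Implicit. Unset Printing Implicit Defensive.

Definition in_sg3 (n1 n2 n3 s : nat) : Prop :=
  exists x y z : nat, s = x * n1 + y * n2 + z * n3.

Definition is_least_in_class3 (n1 n2 n3 n i w : nat) : Prop :=
  in_sg3 n1 n2 n3 w /\ w = i %[mod n] /\
  (forall s, in_sg3 n1 n2 n3 s -> s = i %[mod n] -> w <= s).

(* Main.v *)
Require Import Defs.
From mathcomp Require Import all_boot.
From mathcomp Require Import zify.

Definition gf (t n2 n3 k : nat) := k %/ t * n3 + k %% t * n2.

Lemma gf_qr t n2 n3 q r : r < t -> gf t n2 n3 (q * t + r) = q * n3 + r * n2.
Proof.
move=> rt; rewrite /gf divnMDl ?(leq_ltn_trans _ rt) // modnMDl.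
by rewrite divn_small // modn_small // addn0.
Qed.

Lemma gf_step t n2 n3 k : 0 < t -> 0 < n2 -> (t - 1) * n2 < n3 ->
  gf t n2 n3 k <= gf t n2 n3 k.+1.
Proof.
move=> t0 n20 h.
have e := divn_eq k t. have lt := ltn_pmod k t0.
move: (k %/ t) (k %% t) e lt => q r -> lt.
rewrite gf_qr //.
case: (ltnP r.+1 t) => h2.
  by rewrite -addnS gf_qr //; nia.
have rt : r.+1 = t by apply/eqP; rewrite eqn_leq lt h2.
have -> : (q * t + r).+1 = q.+1 * t + 0 by lia.
rewrite gf_qr //.
have : r * n2 <= (t - 1) * n2 by apply: leq_mul; lia.
nia.
Qed.

Lemma gf_mono t n2 n3 i k : 0 < t -> 0 < n2 -> (t - 1) * n2 < n3 -> i <= k ->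
  gf t n2 n3 i <= gf t n2 n3 k.
Proof.
move=> t0 n20 h; elim: k => [|k IH]; first by rewrite leqn0 => /eqP ->.
rewrite leq_eqVlt => /orP [/eqP -> //|]; rewrite ltnS => /IH H.
exact: leq_trans H (@gf_step t n2 n3 k t0 n20 h).
Qed.

Lemma gf_bound t n2 n3 y z : 0 < t -> n3 <= t * n2 ->
  gf t n2 n3 (y + z * t) <= y * n2 + z * n3.
Proof.
move=> t0 h.
have e := divn_eq y t. have lt := ltn_pmod y t0.
move: (y %/ t) (y %% t) e lt => q r -> lt.
have -> : q * t + r + z * t = (q + z) * t + r by lia.
rewrite gf_qr //.
have : q * n3 <= q * (t * n2) by apply: leq_mul.
nia.
Qed.

Theorem proposition3p6 (m a b t : nat) :
  3 <= m -> 1 <= a -> 2 <= t -> t <= m - 1 ->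
  (t - 1) * (a * m + 1) < b * m + t ->
  b * m + t < t * (a * m + 1) ->
  forall i, i < m ->
    is_least_in_class3 m (a * m + 1) (b * m + t) m i
      ((i %/ t) * (b * m + t) + (i %% t) * (a * m + 1)).
Proof.
move=> m3 a1 t2 tm h1 h2 i im.
have t0 : 0 < t by lia.
have ei := divn_eq i t.
split; [|split].
- by exists 0, (i %% t), (i %/ t); lia.
- have -> : i %/ t * (b * m + t) + i %% t * (a * m + 1)
      = (i %/ t * b + i %% t * a) * m + i by rewrite {5}ei; nia.
  by rewrite modnMDl.
- move=> s [x [y [z ->]]] hs.
  have -> : i %/ t * (b * m + t) + i %% t * (a * m + 1)
      = gf t (a * m + 1) (b * m + t) i by [].
  have es : x * m + y * (a * m + 1) + z * (b * m + t)
      = (x + y * a + z * b) * m + (y + z * t) by nia.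
  move: hs; rewrite es modnMDl (modn_small im) => hs.
  have ik : i <= y + z * t by rewrite -hs leq_mod.
  apply: leq_trans (@gf_mono t (a*m+1) (b*m+t) i _ t0 _ h1 ik) _; first by lia.
  apply: leq_trans (@gf_bound t (a*m+1) (b*m+t) y z t0 (ltnW h2)) _.
  lia.
Qed.
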